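(* Let $\lambda=(\lambda_m)_{m\in\mathbb{Z}}$ be a sequence of real numbers in $[0,1)$. Then there exist an entire function $P_\lambda:\mathbb{C}\to\mathbb{C}$ vanishing at every point of the set $\{n+\lambda_m+im: m,n\in\mathbb{Z}\}$ and a constant $c>0$ such that $|P_\lambda(z)|\le e^{c|z|^2}$ for all $z\in\mathbb{C}$. *)

(* Defs.v *)
From Stdlib Require Import Reals ZArith.
From Coquelicot Require Import Coquelicot.
Open Scope R_scope.

Definition entire (f : C -> C) : Prop := forall z : C, @ex_derive C_AbsRing C_NormedModule f z.

(* Main.v *)
Require Import Defs.
From Stdlib Require Import Reals ZArith Lra Lia Psatz.
From Coquelicot Require Import Coquelicot.
Open Scope R_scope.

Definition Cexp (z : C) : C := (exp (fst z) * cos (snd z), exp (fst z) * sin (snd z)).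

Lemma C_ext (a b : C) : fst a = fst b -> snd a = snd b -> a = b.
Proof. destruct a, b; simpl; intros; subst; reflexivity. Qed.

Lemma Cexp_add a b : Cexp (a + b)%C = (Cexp a * Cexp b)%C.
Proof.
  destruct a as [a1 a2], b as [b1 b2]; unfold Cexp; apply C_ext; simpl;
  rewrite exp_plus; [rewrite cos_plus | rewrite sin_plus]; ring.
Qed.

Lemma Cmod_Cexp z : Cmod (Cexp z) = exp (fst z).
Proof.
  destruct z as [x y]; unfold Cexp, Cmod; cbn [fst snd].
  replace ((exp x * cos y) ^ 2 + (exp x * sin y) ^ 2) with (exp x ^ 2) .
  - rewrite sqrt_pow2; [reflexivity| left; apply exp_pos].
  - rewrite <- (Rmult_1_r (exp x ^ 2)), <- (sin2_cos2 y). unfold Rsqr. ring.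
Qed.

Lemma Cmod_le_sum z : Cmod z <= Rabs (fst z) + Rabs (snd z).
Proof.
  destruct z as [x y]; unfold Cmod; cbn [fst snd].
  apply Rsqr_incr_0_var.
  - rewrite Rsqr_sqrt by nra. unfold Rsqr.
    pose proof (Rabs_pos x); pose proof (Rabs_pos y).
    pose proof (Rsqr_abs x); pose proof (Rsqr_abs y). unfold Rsqr in *. nra.
  - pose proof (Rabs_pos x); pose proof (Rabs_pos y); lra.
Qed.

Lemma Cmod_fst_le z : Rabs (fst z) <= Cmod z.
Proof. apply re_le_Cmod. Qed.
Lemma Cmod_snd_le z : Rabs (snd z) <= Cmod z.
Proof. pose proof (Rmax_Cmod z). pose proof (Rmax_r (Rabs (fst z)) (Rabs (snd z))). lra. Qed.

Lemma PI_gt3 : 3 < PI.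
Proof. pose proof PI2_3_2; lra. Qed.

Lemma Rabs_le_inv a b : Rabs a <= b -> - b <= a <= b.
Proof. intros H. pose proof (Rle_abs a). pose proof (Rle_abs (-a)). rewrite Rabs_Ropp in *. lra. Qed.

Lemma exp_le_inv x : x < 1 -> exp x <= / (1 - x).
Proof.
  intros H. pose proof (exp_ineq1_le (-x)). rewrite exp_Ropp in H0.
  assert (0 < exp x) by apply exp_pos.
  apply Rmult_le_reg_r with (1 - x); [lra|]. rewrite Rinv_l by lra.
  apply Rmult_le_reg_r with (/ exp x). apply Rinv_0_lt_compat; lra.
  rewrite Rmult_1_l. replace (exp x * (1 - x) * / exp x) with (1 - x) by (field; lra). lra.
Qed.

Lemma exp_quad x : Rabs x <= /2 -> 0 <= exp x - 1 - x <= 2 * x^2.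
Proof.
  intros H. pose proof (exp_ineq1_le x). split; [lra|].
  apply Rabs_le_inv in H. pose proof (exp_le_inv x ltac:(lra)).
  assert (/ (1 - x) - 1 - x = x^2 / (1 - x)) by (field; lra).
  assert (x^2 / (1-x) <= 2 * x^2).
  { unfold Rdiv. apply Rmult_le_reg_r with (1-x); [lra|].
    rewrite Rmult_assoc, Rinv_l by lra. nra. }
  lra.
Qed.

Lemma exp_lin x : Rabs x <= /2 -> Rabs (exp x - 1) <= 2 * Rabs x.
Proof.
  intros H. pose proof (exp_quad x H). pose proof (Rabs_le_inv _ _ H). apply Rabs_le.
  destruct (Rle_dec 0 x).
  - rewrite Rabs_right in * by lra. nra.
  - rewrite Rabs_left in * by lra. nra.
Qed.

Lemma cos_lb1 y : -2 <= y <= 2 -> 1 - y^2/2 <= cos y.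
Proof.
  intros H. destruct (pre_cos_bound y 0 ltac:(lra) ltac:(lra)) as [H1 _].
  unfold cos_approx, cos_term in H1. simpl sum_f_R0 in H1.
  replace (1 - y^2/2) with (1 * (1 / 1) + -1 * 1 * (y * (y * 1) / (1 + 1))) by field. exact H1.
Qed.

Lemma sin_b1 y : 0 <= y <= 4 -> y - y^3/6 <= sin y <= y - y^3/6 + y^5/120.
Proof.
  intros H. destruct (pre_sin_bound y 0 ltac:(lra) ltac:(lra)) as [H1 H2].
  unfold sin_approx, sin_term in H1, H2. simpl sum_f_R0 in H1, H2.
  split.
  - eapply Rle_trans; [|exact H1]. right. field.
  - eapply Rle_trans; [exact H2|]. right. field.
Qed.

Lemma cos_quad y : Rabs y <= 1 -> 0 <= 1 - cos y <= y^2 / 2.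
Proof.
  intros H. apply Rabs_le_inv in H.
  pose proof (cos_lb1 y ltac:(lra)).
  pose proof (COS_bound y). split; lra.
Qed.

Lemma sin_cubic_pos y : 0 <= y <= 1 -> Rabs (sin y - y) <= y^2.
Proof.
  intros H. destruct (sin_b1 y ltac:(lra)) as [H1 H2].
  assert (0 <= y^2 <= 1) by nra.
  assert (0 <= y^3 * (1/6 - y^2/120)) by (apply Rmult_le_pos; nra).
  assert (y^3 <= y^2) by nra.
  assert (0 <= y^3) by nra.
  apply Rabs_le. split; nra.
Qed.

Lemma sin_cubic y : Rabs y <= 1 -> Rabs (sin y - y) <= y^2.
Proof.
  intros H. destruct (Rle_dec 0 y).
  - apply sin_cubic_pos. apply Rabs_le_inv in H; lra.
  - replace (sin y - y) with (- (sin (-y) - (-y))) by (rewrite sin_neg; ring).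
    rewrite Rabs_Ropp. replace (y^2) with ((-y)^2) by ring.
    apply sin_cubic_pos. apply Rabs_le_inv in H; lra.
Qed.

Lemma sin_abs_pos y : 0 <= y <= 1 -> Rabs (sin y) <= y.
Proof.
  intros H. destruct (sin_b1 y ltac:(lra)) as [H1 H2].
  assert (0 <= y^2 <= 1) by nra.
  assert (0 <= y^3 * (1/6 - y^2/120)) by (apply Rmult_le_pos; nra).
  assert (y^3 <= y) by nra. assert (0 <= y^3) by nra.
  apply Rabs_le. split; nra.
Qed.

Lemma sin_abs y : Rabs y <= 1 -> Rabs (sin y) <= Rabs y.
Proof.
  intros H. destruct (Rle_dec 0 y).
  - rewrite (Rabs_right y) in * by lra. apply sin_abs_pos; lra.
  - rewrite (Rabs_left y) in * by lra. rewrite <- (Ropp_involutive y) at 1.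
    rewrite sin_neg, Rabs_Ropp. apply sin_abs_pos. lra.
Qed.

Lemma Cmod_sq z : Cmod z ^ 2 = fst z ^ 2 + snd z ^ 2.
Proof. apply Cmod2_alt. Qed.

Lemma Cexp_quad z : Cmod z <= /2 -> Cmod (Cexp z - 1 - z)%C <= 3 * Cmod z ^ 2.
Proof.
  intros H. destruct z as [x y].
  pose proof (Cmod_fst_le (x,y)); pose proof (Cmod_snd_le (x,y)). cbn [fst snd] in *.
  rewrite Cmod_sq. cbn [fst snd].
  eapply Rle_trans; [apply Cmod_le_sum|].
  unfold Cexp. cbn [fst snd]. simpl (fst _). simpl (snd _).
  assert (Hx : Rabs x <= /2) by lra. assert (Hy : Rabs y <= 1) by lra.
  pose proof (exp_quad x Hx) as E1. pose proof (exp_lin x Hx) as E2.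
  pose proof (cos_quad y Hy) as C1. pose proof (sin_cubic y Hy) as S1.
  pose proof (SIN_bound y). pose proof (COS_bound y).
  assert (Hsy : Rabs (sin y) <= Rabs y).
  { apply sin_abs; lra. }
  assert (Hex : exp x <= 2). { pose proof (exp_le_inv x). apply Rabs_le_inv in Hx.
    assert (/ (1 - x) <= 2). { apply Rmult_le_reg_r with (1-x); [lra|]. rewrite Rinv_l by lra. lra. }
    lra. }
  pose proof (exp_pos x).
  assert (R1 : Rabs (exp x * cos y - 1 - x) <= 2 * x^2 + y^2).
  { replace (exp x * cos y - 1 - x) with ((exp x - 1 - x) - exp x * (1 - cos y)) by ring.
    eapply Rle_trans; [apply Rabs_triang|]. rewrite Rabs_Ropp, Rabs_mult.
    rewrite (Rabs_right (exp x - 1 - x)) by lra.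
    rewrite (Rabs_right (exp x)) by lra. rewrite (Rabs_right (1 - cos y)) by lra. nra. }
  assert (R2 : Rabs (exp x * sin y - 0 - y) <= x^2 + 2 * y^2).
  { replace (exp x * sin y - 0 - y) with ((exp x - 1) * sin y + (sin y - y)) by ring.
    eapply Rle_trans; [apply Rabs_triang|]. rewrite Rabs_mult.
    pose proof (Rabs_pos (exp x - 1)). pose proof (Rabs_pos (sin y)).
    assert (Q1 : Rabs (exp x - 1) * Rabs (sin y) <= 2 * Rabs x * Rabs y) by (apply Rmult_le_compat; lra).
    assert (Q2 : 2 * Rabs x * Rabs y <= x^2 + y^2).
    { pose proof (Rsqr_abs x) as Ax; pose proof (Rsqr_abs y) as Ay. unfold Rsqr in Ax, Ay.
      pose proof (Rabs_pos x); pose proof (Rabs_pos y).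
      replace (x^2) with (Rabs x * Rabs x) by (rewrite <- Ax; ring).
      replace (y^2) with (Rabs y * Rabs y) by (rewrite <- Ay; ring). pose proof (pow2_ge_0 (Rabs x - Rabs y)); nra. }
    nra. }
  simpl in R1, R2 |- *. unfold Rminus in R1, R2. lra.
Qed.

Lemma sqrt2_lt2 : sqrt 2 < 2.
Proof. pose proof Rlt_sqrt2_0. pose proof (sqrt_sqrt 2 ltac:(lra)). nra. Qed.

Lemma quad_derive (f : C -> C) (z D : C) (delta K : R) :
  0 < delta -> 0 <= K ->
  (forall h : C, Cmod h < delta -> Cmod (f (z + h)%C - f z - D * h)%C <= K * Cmod h ^ 2) ->
  @is_derive C_AbsRing C_NormedModule f z D.
Proof.
  intros Hd HK H. split.
  - apply is_linear_scal_l.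
  - intros x Hx. pose proof (@is_filter_lim_locally_unique C_AbsRing (AbsRing_NormedModule C_AbsRing) z x Hx) as Hzx. subst x.
    intros eps.
    assert (Hr : 0 < Rmin delta (eps / (K + 1)) / 2).
    { apply Rmin_case; pose proof (cond_pos eps); unfold Rdiv.
      - lra.
      - apply Rmult_lt_0_compat; [apply Rmult_lt_0_compat|]; try apply Rinv_0_lt_compat; lra. }
    exists (mkposreal _ Hr). intros y Hy. simpl in Hy.
    change (Cmod (minus y z) < Rmin delta (eps / (K + 1)) / 2) in Hy.
    pose proof sqrt2_lt2. pose proof Rlt_sqrt2_0.
    set (h := minus y z) in *.
    assert (Hh : Cmod h < Rmin delta (eps / (K + 1))).
    { change (Cmod h) with (Cmod (minus y z)) in *. nra. }
    assert (Hy' : y = (z + h)%C).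
    { unfold h. apply C_ext; simpl; ring. }
    change (norm (minus (minus (f y) (f z)) (scal h D)) <= eps * norm h).
    change (Cmod (f y - f z - h * D)%C <= eps * Cmod h).
    rewrite Hy'. rewrite (Cmult_comm h D).
    eapply Rle_trans; [apply H|].
    + eapply Rlt_le_trans; [exact Hh| apply Rmin_l].
    + pose proof (Cmod_ge_0 h).
      assert (Cmod h <= eps / (K + 1)) by (pose proof (Rmin_r delta (eps / (K + 1))); lra).
      assert (K * Cmod h <= eps).
      { apply Rle_trans with ((K+1) * (eps / (K+1))).
        - apply Rle_trans with ((K+1) * Cmod h); [nra|]. apply Rmult_le_compat_l; lra.
        - right. field. lra. }
      replace (K * Cmod h ^ 2) with ((K * Cmod h) * Cmod h) by ring.
      apply Rmult_le_compat_r; lra.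
Qed.

Definition Ccv (u : nat -> C) (l : C) :=
  forall eps, 0 < eps -> exists N, forall n, (N <= n)%nat -> Cmod (u n - l)%C <= eps.
Definition Ccauchy (u : nat -> C) :=
  forall eps, 0 < eps -> exists N, forall n m, (N <= n)%nat -> (N <= m)%nat -> Cmod (u n - u m)%C <= eps.
Definition CLim (u : nat -> C) : C :=
  (real (Lim_seq (fun n => fst (u n))), real (Lim_seq (fun n => snd (u n)))).

Lemma Cmod_sub_le a b : Cmod (a - b)%C <= Cmod a + Cmod b.
Proof. eapply Rle_trans; [apply Cmod_triangle|]. rewrite Cmod_opp. lra. Qed.

Lemma Cmod_sub_tri a b c : Cmod (a - c)%C <= Cmod (a - b)%C + Cmod (b - c)%C.
Proof. replace (a - c)%C with ((a - b) + (b - c))%C by ring. apply Cmod_triangle. Qed.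

Lemma real_cauchy_lim (v : nat -> R) :
  (forall eps, 0 < eps -> exists N, forall n m, (N <= n)%nat -> (N <= m)%nat -> Rabs (v n - v m) <= eps) ->
  forall eps, 0 < eps -> exists N, forall n, (N <= n)%nat -> Rabs (v n - real (Lim_seq v)) <= eps.
Proof.
  intros H.
  assert (Hc : Cauchy_crit v).
  { intros eps Heps. destruct (H (eps/2) ltac:(lra)) as [N HN]. exists N.
    intros n m Hn Hm. unfold Rdist. specialize (HN n m Hn Hm). lra. }
  destruct (Rcomplete.R_complete v Hc) as [l Hl].
  assert (Lim_seq v = l).
  { apply is_lim_seq_unique. apply is_lim_seq_Reals. exact Hl. }
  rewrite H0. simpl. intros eps Heps. destruct (Hl eps Heps) as [N HN]. exists N.
  intros n Hn. specialize (HN n Hn). unfold Rdist in HN. lra.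
Qed.

Lemma Ccauchy_cv u : Ccauchy u -> Ccv u (CLim u).
Proof.
  intros H.
  assert (H1 : forall eps, 0 < eps -> exists N, forall n, (N <= n)%nat ->
     Rabs (fst (u n) - real (Lim_seq (fun n => fst (u n)))) <= eps).
  { apply (real_cauchy_lim (fun n => fst (u n))). intros eps Heps.
    destruct (H eps Heps) as [N HN]. exists N. intros n m Hn Hm.
    eapply Rle_trans; [|apply (HN n m Hn Hm)].
    eapply Rle_trans; [|apply (Cmod_fst_le (u n - u m)%C)]. simpl. right. reflexivity. }
  assert (H2 : forall eps, 0 < eps -> exists N, forall n, (N <= n)%nat ->
     Rabs (snd (u n) - real (Lim_seq (fun n => snd (u n)))) <= eps).
  { apply (real_cauchy_lim (fun n => snd (u n))). intros eps Heps.
    destruct (H eps Heps) as [N HN]. exists N. intros n m Hn Hm.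
    eapply Rle_trans; [|apply (HN n m Hn Hm)].
    eapply Rle_trans; [|apply (Cmod_snd_le (u n - u m)%C)]. simpl. right. reflexivity. }
  intros eps Heps.
  destruct (H1 (eps/2) ltac:(lra)) as [N1 HN1]. destruct (H2 (eps/2) ltac:(lra)) as [N2 HN2].
  exists (N1 + N2)%nat. intros n Hn.
  eapply Rle_trans; [apply Cmod_le_sum|].
  specialize (HN1 n ltac:(lia)). specialize (HN2 n ltac:(lia)).
  unfold CLim. simpl. unfold Rminus in *. lra.
Qed.

Lemma Ccv_le u l v B : Ccv u l -> (exists N0, forall n, (N0 <= n)%nat -> Cmod (u n - v)%C <= B) ->
  Cmod (l - v)%C <= B.
Proof.
  intros H [N0 HN0]. apply le_epsilon. intros eps Heps.
  destruct (H eps Heps) as [N HN].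
  specialize (HN (N + N0)%nat ltac:(lia)). specialize (HN0 (N + N0)%nat ltac:(lia)).
  pose proof (Cmod_sub_tri l (u (N + N0)%nat) v).
  replace (l - u (N + N0)%nat)%C with (- (u (N + N0)%nat - l))%C in H0 by ring.
  rewrite Cmod_opp in H0. lra.
Qed.

Lemma Ccv_ge u l b N0 : Ccv u l -> (forall n, (N0 <= n)%nat -> b <= Cmod (u n)) -> b <= Cmod l.
Proof.
  intros H HN0. apply le_epsilon. intros eps Heps.
  destruct (H eps Heps) as [N HN].
  specialize (HN (N + N0)%nat ltac:(lia)). specialize (HN0 (N + N0)%nat ltac:(lia)).
  pose proof (Cmod_sub_tri (u (N + N0)%nat) l 0).
  rewrite !Cminus_0_r in H0 || idtac.
  replace (u (N + N0)%nat - 0)%C with (u (N + N0)%nat) in H0 by ring.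
  replace (l - 0)%C with l in H0 by ring. lra.
Qed.

From Stdlib Require Import IndefiniteDescription.

Lemma Cmod_6 a1 a2 a3 a4 a5 a6 : Cmod (a1 - a2 - a3 + a4 - a5 + a6)%C <=
  Cmod a1 + Cmod a2 + Cmod a3 + Cmod a4 + Cmod a5 + Cmod a6.
Proof.
  pose proof (Cmod_triangle (a1 - a2 - a3 + a4 - a5) a6).
  pose proof (Cmod_sub_le (a1 - a2 - a3 + a4) a5).
  pose proof (Cmod_triangle (a1 - a2 - a3) a4).
  pose proof (Cmod_sub_le (a1 - a2) a3).
  pose proof (Cmod_sub_le a1 a2). lra.
Qed.

Lemma Ccv_comb a b c A B Cc h : Ccv a A -> Ccv b B -> Ccv c Cc ->
  Ccv (fun n => a n - b n - c n * h)%C (A - B - Cc * h)%C.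
Proof.
  intros Ha Hb Hc eps Heps.
  pose proof (Cmod_ge_0 h).
  destruct (Ha (eps/3) ltac:(lra)) as [N1 H1].
  destruct (Hb (eps/3) ltac:(lra)) as [N2 H2].
  assert (Hp : 0 < eps / 3 / (Cmod h + 1)) by (apply Rdiv_lt_0_compat; lra).
  destruct (Hc _ Hp) as [N3 H3].
  exists (N1 + N2 + N3)%nat. intros n Hn.
  specialize (H1 n ltac:(lia)). specialize (H2 n ltac:(lia)). specialize (H3 n ltac:(lia)).
  replace (a n - b n - c n * h - (A - B - Cc * h))%C with
     ((a n - A) - (b n - B) - (c n - Cc) * h)%C by ring.
  pose proof (Cmod_sub_le ((a n - A) - (b n - B)) ((c n - Cc) * h)).
  pose proof (Cmod_sub_le (a n - A) (b n - B)).
  rewrite Cmod_mult in H0.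
  assert (Cmod (c n - Cc) * Cmod h <= eps / 3).
  { apply Rle_trans with (eps / 3 / (Cmod h + 1) * (Cmod h + 1)).
    - pose proof (Cmod_ge_0 (c n - Cc)). nra.
    - right. field. lra. }
  lra.
Qed.

Lemma limit_holo (f : nat -> C -> C) (F : C -> C) (z : C) (delta K : R) :
  0 < delta -> 0 <= K ->
  (forall w, Ccv (fun n => f n w) (F w)) ->
  (forall n, exists D, forall h, Cmod h < delta ->
       Cmod (f n (z + h)%C - f n z - D * h)%C <= K * Cmod h ^ 2) ->
  @ex_derive C_AbsRing C_NormedModule F z.
Proof.
  intros Hd HK Hcv HD.
  set (D := fun n => proj1_sig (constructive_indefinite_description _ (HD n))).
  assert (HDn : forall n h, Cmod h < delta ->
       Cmod (f n (z + h)%C - f n z - D n * h)%C <= K * Cmod h ^ 2).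
  { intros n. exact (proj2_sig (constructive_indefinite_description _ (HD n))). }
  clearbody D.
  assert (HC : Ccauchy D).
  { intros eps Heps.
    set (t := Rmin (delta / 2) (eps / (4 * K + 4))).
    assert (Ht : 0 < t).
    { unfold t. apply Rmin_case; [lra|]. apply Rdiv_lt_0_compat; lra. }
    assert (Ht1 : t < delta) by (unfold t; pose proof (Rmin_l (delta/2) (eps / (4 * K + 4))); lra).
    assert (Ht2 : 2 * K * t <= eps / 2).
    { unfold t. pose proof (Rmin_r (delta/2) (eps / (4 * K + 4))).
      apply Rle_trans with (2 * K * (eps / (4 * K + 4))).
      - apply Rmult_le_compat_l; [lra|]. exact H.
      - assert (He : eps / (4 * K + 4) * (4 * K + 4) = eps) by (field; lra).
        assert (0 < eps / (4 * K + 4)) by (apply Rdiv_lt_0_compat; lra).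
        rewrite <- He at 2. nra. }
    set (h := RtoC t).
    assert (Hh : Cmod h = t) by (unfold h; rewrite Cmod_R; apply Rabs_right; lra).
    destruct (Hcv (z + h)%C (eps * t / 8) ltac:(nra)) as [N1 HN1].
    destruct (Hcv z (eps * t / 8) ltac:(nra)) as [N2 HN2].
    exists (N1 + N2)%nat. intros n m Hn Hm.
    assert (E : ((D n - D m) * h)%C =
       ((f n (z + h)%C - F (z + h)%C) - (f m (z + h)%C - F (z + h)%C)
        - (f n z - F z) + (f m z - F z)
        - (f n (z + h)%C - f n z - D n * h) + (f m (z + h)%C - f m z - D m * h))%C) by ring.
    assert (B : Cmod ((D n - D m) * h)%C <= eps * t / 2 + 2 * K * t ^ 2).
    { rewrite E.
      pose proof (HN1 n ltac:(lia)); pose proof (HN1 m ltac:(lia)).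
      pose proof (HN2 n ltac:(lia)); pose proof (HN2 m ltac:(lia)).
      pose proof (HDn n h ltac:(lra)); pose proof (HDn m h ltac:(lra)). rewrite Hh in *.
      eapply Rle_trans; [apply Cmod_6|]. nra. }
    rewrite Cmod_mult, Hh in B.
    apply Rmult_le_reg_r with t; [lra|]. nra. }
  pose proof (Ccauchy_cv D HC) as HDl.
  set (Dl := CLim D) in *.
  apply (ex_intro _ Dl).
  apply (quad_derive F z Dl delta K Hd HK).
  intros h Hh.
  assert (Hu : Ccv (fun n => (f n (z + h)%C - f n z - D n * h)%C) (F (z + h)%C - F z - Dl * h)%C).
  { apply Ccv_comb; auto. }
  pose proof (Ccv_le _ _ 0%C (K * Cmod h ^ 2) Hu) as R.
  replace (F (z + h)%C - F z - Dl * h - 0)%C with (F (z + h)%C - F z - Dl * h)%C in R by ring.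
  apply R. exists 0%nat. intros n _.
  replace (f n (z + h)%C - f n z - D n * h - 0)%C with (f n (z + h)%C - f n z - D n * h)%C by ring.
  apply HDn; exact Hh.
Qed.

Definition Inv (F : C -> C) (z : C) (delta Q : R) :=
  (forall h, Cmod h < delta -> Cmod (F (z + h)%C) <= Q) /\
  exists D, Cmod D <= Q ^ 2 /\
    forall h, Cmod h < delta -> Cmod (F (z + h)%C - F z - D * h)%C <= Q ^ 4 * Cmod h ^ 2.

Definition Fac (g : C -> C) (z : C) (delta eta : R) :=
  (forall h, Cmod h < delta -> Cmod (g (z + h)%C) <= 1 + eta) /\
  exists d, Cmod d <= eta /\
    forall h, Cmod h < delta -> Cmod (g (z + h)%C - g z - d * h)%C <= eta * Cmod h ^ 2.

Lemma Cplus_0_r' (z : C) : (z + 0)%C = z.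
Proof. apply C_ext; simpl; ring. Qed.

Lemma Inv_mul F g z delta Q eta :
  0 < delta <= 1 -> 1 <= Q -> 0 <= eta ->
  Inv F z delta Q -> Fac g z delta eta ->
  Inv (fun w => F w * g w)%C z delta (Q * (1 + eta)).
Proof.
  intros Hd HQ He [HF1 [D [HD HF2]]] [Hg1 [d [Hdd Hg2]]].
  assert (HA : Cmod (F z) <= Q).
  { rewrite <- (Cplus_0_r' z). apply HF1. rewrite Cmod_0; lra. }
  assert (Ha : Cmod (g z) <= 1 + eta).
  { rewrite <- (Cplus_0_r' z) at 1. apply Hg1. rewrite Cmod_0; lra. }
  split.
  - intros h Hh. rewrite Cmod_mult. apply Rmult_le_compat; try apply Cmod_ge_0; auto.
  - exists (F z * d + D * g z)%C. split.
    + eapply Rle_trans; [apply Cmod_triangle|]. rewrite !Cmod_mult.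
      pose proof (Cmod_ge_0 (F z)); pose proof (Cmod_ge_0 d); pose proof (Cmod_ge_0 D);
      pose proof (Cmod_ge_0 (g z)).
      assert (Cmod (F z) * Cmod d <= Q * eta) by (apply Rmult_le_compat; lra).
      assert (Cmod D * Cmod (g z) <= Q^2 * (1 + eta)) by (apply Rmult_le_compat; lra).
      assert (Q <= Q^2) by nra.
      assert (0 <= Q^2 * eta^2) by (apply Rmult_le_pos; nra).
      assert (Q^2 * eta <= Q^2 * eta) by lra.
      replace ((Q * (1 + eta))^2) with (Q^2 + 2 * Q^2 * eta + Q^2 * eta^2) by ring.
      nra.
    + intros h Hh.
      set (A := F z) in *. set (a := g z) in *.
      set (G := F (z + h)%C). set (gg := g (z + h)%C).
      specialize (HF1 h Hh). specialize (Hg1 h Hh). specialize (HF2 h Hh). specialize (Hg2 h Hh).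
      fold G in HF1, HF2. fold gg in Hg1, Hg2.
      set (R := (G - A - D * h)%C) in *. set (r := (gg - a - d * h)%C) in *.
      assert (E : (G * gg - A * a - (A * d + D * a) * h)%C = (R * a + (G - A) * d * h + G * r)%C).
      { unfold R, r. ring. }
      rewrite E.
      set (t := Cmod h) in *. assert (Ht : 0 <= t <= 1) by (split; [apply Cmod_ge_0| lra]).
      assert (HGA : Cmod (G - A)%C <= (Q^2 + Q^4) * t).
      { replace (G - A)%C with (D * h + R)%C by (unfold R; ring).
        eapply Rle_trans; [apply Cmod_triangle|]. rewrite Cmod_mult. fold t.
        pose proof (Cmod_ge_0 D).
        assert (Cmod D * t <= Q^2 * t) by (apply Rmult_le_compat_r; lra).
        assert (Q^4 * t^2 <= Q^4 * t). { assert (0 <= Q^4) by nra. apply Rmult_le_compat_l; nra. }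
        lra. }
      eapply Rle_trans; [apply Cmod_triangle|].
      pose proof (Cmod_triangle (R * a) ((G - A) * d * h)).
      rewrite !Cmod_mult in *. repeat match goal with H : context [Cmod h] |- _ => progress (fold t in H) end; fold t.
      pose proof (Cmod_ge_0 R); pose proof (Cmod_ge_0 a); pose proof (Cmod_ge_0 (G - A)%C);
      pose proof (Cmod_ge_0 d); pose proof (Cmod_ge_0 G); pose proof (Cmod_ge_0 r).
      assert (T1 : Cmod R * Cmod a <= Q^4 * t^2 * (1 + eta)) by (apply Rmult_le_compat; lra).
      assert (T2 : Cmod (G - A)%C * Cmod d * t <= (Q^2 + Q^4) * t * eta * t).
      { apply Rmult_le_compat_r; [lra|]. apply Rmult_le_compat; lra. }
      assert (T3 : Cmod G * Cmod r <= Q * (eta * t^2)) by (apply Rmult_le_compat; lra).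
      assert (Q <= Q^4) by (assert (Q <= Q^2) by nra; nra).
      assert (Q^2 <= Q^4) by nra.
      assert (B : Q^4 * t^2 * (1 + eta) + (Q^2 + Q^4) * t * eta * t + Q * (eta * t^2)
                  <= Q^4 * (1 + 4 * eta) * t^2).
      { assert (0 <= eta * t^2) by (apply Rmult_le_pos; nra).
        assert (Q^2 * (eta * t^2) <= Q^4 * (eta * t^2)) by (apply Rmult_le_compat_r; lra).
        assert (Q * (eta * t^2) <= Q^4 * (eta * t^2)) by (apply Rmult_le_compat_r; lra).
        nra. }
      assert (B2 : Q^4 * (1 + 4 * eta) <= (Q * (1 + eta))^4).
      { replace ((Q * (1 + eta))^4) with (Q^4 * (1 + eta)^4) by ring.
        apply Rmult_le_compat_l; [nra|].
        assert (0 <= eta^2) by nra. assert (0 <= eta^3) by nra. assert (0 <= eta^4) by nra.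
        replace ((1 + eta)^4) with (1 + 4*eta + 6*eta^2 + 4*eta^3 + eta^4) by ring. lra. }
      assert (0 <= t^2) by nra.
      assert (Q^4 * (1 + 4 * eta) * t^2 <= (Q * (1 + eta))^4 * t^2) by (apply Rmult_le_compat_r; lra).
      lra.
Qed.

Definition ek (k : nat) : R := exp (- (2 * PI) * INR k).

Lemma ek_pos k : 0 < ek k.
Proof. apply exp_pos. Qed.

Lemma exp_m2pi : exp (- (2 * PI)) <= / 2.
Proof.
  pose proof PI_gt3. pose proof (exp_ineq1_le (2 * PI)).
  rewrite exp_Ropp. apply Rinv_le_contravar; lra.
Qed.

Lemma ek_S k : ek (S k) = ek k * exp (- (2 * PI)).
Proof. unfold ek. rewrite S_INR, <- exp_plus. f_equal. ring. Qed.

Lemma ek_le1 k : ek k <= 1.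
Proof. unfold ek. rewrite <- exp_0. apply exp_le_3 || idtac.
  destruct (Rle_lt_or_eq_dec 0 (INR k) (pos_INR k)) as [H|H].
  - left. apply exp_increasing. pose proof PI_gt3. nra.
  - rewrite <- H. right. f_equal. ring.
Qed.

Fixpoint rsum (f : nat -> R) (N : nat) : R :=
  match N with O => 0 | S n => rsum f n + f n end.

Lemma rsum_geom A N : 0 <= A -> rsum (fun k => A * ek k) N <= 2 * A * (1 - ek N).
Proof.
  intros HA. induction N as [|N IH]; simpl.
  - unfold ek. simpl. rewrite Rmult_0_r, exp_0. lra.
  - rewrite ek_S. pose proof exp_m2pi. pose proof (ek_pos N).
    assert (A * (ek N * exp (- (2 * PI)))  <= A * (ek N / 2)).
    { apply Rmult_le_compat_l; [lra|]. unfold Rdiv. apply Rmult_le_compat_l; lra. }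
    nra.
Qed.

Lemma rsum_geom' A N : 0 <= A -> rsum (fun k => A * ek k) N <= 2 * A.
Proof. intros HA. pose proof (rsum_geom A N HA). pose proof (ek_pos N). nra. Qed.

Lemma rsum_le f g N : (forall k, f k <= g k) -> rsum f N <= rsum g N.
Proof. intros H. induction N; simpl; [lra|]. specialize (H N). lra. Qed.

Lemma rsum_nonneg f N : (forall k, 0 <= f k) -> 0 <= rsum f N.
Proof. intros H. induction N; simpl; [lra|]. specialize (H N). lra. Qed.

Lemma ek_small eps : 0 < eps -> exists N, ek N <= eps.
Proof.
  intros He. destruct (archimed_cor1 eps He) as [N [HN HN0]].
  exists N. unfold ek. pose proof PI_gt3.
  pose proof (exp_ineq1_le (2 * PI * INR N)).
  assert (0 < INR N) by (apply lt_0_INR; lia).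
  assert (exp (- (2 * PI) * INR N) = / exp (2 * PI * INR N)).
  { rewrite <- exp_Ropp. f_equal. ring. }
  rewrite H2.
  apply Rle_trans with (/ INR N); [|lra].
  apply Rinv_le_contravar; [lra|]. nra.
Qed.

Lemma geom_cauchy (u : nat -> C) B : 0 <= B ->
  (forall n, Cmod (u (S n) - u n)%C <= B * ek n) -> Ccauchy u.
Proof.
  intros HB H.
  assert (Hm : forall n d, Cmod (u (d + n)%nat - u n)%C <= 2 * B * (ek n - ek (d + n)%nat)).
  { intros n d. induction d as [|d IH].
    - simpl. replace (u n - u n)%C with (RtoC 0) by ring. rewrite Cmod_0. lra.
    - replace (S d + n)%nat with (S (d + n)) by lia.
      pose proof (Cmod_sub_tri (u (S (d + n))) (u (d + n)%nat) (u n)).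
      specialize (H (d + n)%nat). rewrite ek_S.
      pose proof exp_m2pi. pose proof (ek_pos (d + n)).
      assert (ek (d + n) * exp (- (2 * PI)) <= ek (d + n) / 2).
      { unfold Rdiv. apply Rmult_le_compat_l; lra. }
      nra. }
  intros eps Heps.
  destruct (ek_small (eps / (4 * B + 1))) as [N HN].
  { apply Rdiv_lt_0_compat; lra. }
  exists N. intros n m Hn Hm'.
  pose proof (Hm N (n - N)%nat) as H1. pose proof (Hm N (m - N)%nat) as H2.
  replace (n - N + N)%nat with n in H1 by lia. replace (m - N + N)%nat with m in H2 by lia.
  pose proof (Cmod_sub_tri (u n) (u N) (u m)).
  replace (u N - u m)%C with (- (u m - u N))%C in H0 by ring. rewrite Cmod_opp in H0.
  pose proof (ek_pos n). pose proof (ek_pos m).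
  assert (4 * B * ek N <= eps).
  { apply Rle_trans with ((4 * B + 1) * ek N). pose proof (ek_pos N). nra.
    apply Rle_trans with ((4 * B + 1) * (eps / (4 * B + 1))).
    apply Rmult_le_compat_l; lra. right; field; lra. }
  nra.
Qed.

Definition am (lambda : Z -> R) (m : Z) : C := (lambda m, IZR m).
Definition tpi : C := (0, 2 * PI).
Definition u1 lambda (k : nat) (w : C) : C := Cexp (tpi * (am lambda (Z.of_nat k + 1) - w))%C.
Definition u2 lambda (k : nat) (w : C) : C := Cexp (tpi * (w - am lambda (- Z.of_nat k)))%C.
Fixpoint PN lambda (N : nat) (w : C) : C :=
  match N with
  | O => 1%C
  | S n => (PN lambda n w * (1 - u1 lambda n w) * (1 - u2 lambda n w))%C
  end.

Lemma fst_u1 lambda k w : fst (tpi * (am lambda (Z.of_nat k + 1) - w))%C = - (2 * PI) * (INR k + 1 - snd w).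
Proof.
  destruct w as [x y]. unfold tpi, am. simpl. rewrite plus_IZR, <- INR_IZR_INZ. ring.
Qed.

Lemma fst_u2 lambda k w : fst (tpi * (w - am lambda (- Z.of_nat k)))%C = - (2 * PI) * (snd w + INR k).
Proof.
  destruct w as [x y]. unfold tpi, am. simpl. rewrite opp_IZR, <- INR_IZR_INZ. ring.
Qed.

Lemma Cmod_u1 lambda k w : Cmod (u1 lambda k w) = exp (- (2 * PI) * (INR k + 1 - snd w)).
Proof. unfold u1. rewrite Cmod_Cexp, fst_u1. reflexivity. Qed.
Lemma Cmod_u2 lambda k w : Cmod (u2 lambda k w) = exp (- (2 * PI) * (snd w + INR k)).
Proof. unfold u2. rewrite Cmod_Cexp, fst_u2. reflexivity. Qed.

Lemma exp_mono a b : a <= b -> exp a <= exp b.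
Proof. intros [H|H]; [left; apply exp_increasing; exact H| right; rewrite H; reflexivity]. Qed.

Lemma u1_bound lambda k w : Cmod (u1 lambda k w) <= exp (2 * PI * Rabs (snd w)) * ek k.
Proof.
  rewrite Cmod_u1. unfold ek. rewrite <- exp_plus. apply exp_mono.
  pose proof PI_gt3. pose proof (Rle_abs (snd w)). nra.
Qed.

Lemma u2_bound lambda k w : Cmod (u2 lambda k w) <= exp (2 * PI * Rabs (snd w)) * ek k.
Proof.
  rewrite Cmod_u2. unfold ek. rewrite <- exp_plus. apply exp_mono.
  pose proof PI_gt3. pose proof (Rle_abs (- snd w)). rewrite Rabs_Ropp in H0. nra.
Qed.

Lemma Cexp_small_mod w : Cmod w <= /2 -> Cmod (Cexp w) <= 2.
Proof.
  intros H. rewrite Cmod_Cexp. pose proof (Cmod_fst_le w). pose proof (Rle_abs (fst w)).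
  apply Rle_trans with (exp (/2)). apply exp_mono; lra.
  apply Rle_trans with (/ (1 - /2)). apply exp_le_inv; lra. right; field.
Qed.

Lemma Fac_exp (L : C -> C) (beta z : C) :
  (forall h, L (z + h)%C = (L z + beta * h)%C) -> Cmod beta <= 8 ->
  Fac (fun w => 1 - Cexp (L w))%C z (/16) (192 * Cmod (Cexp (L z))).
Proof.
  intros HL Hb.
  set (E := Cexp (L z)). pose proof (Cmod_ge_0 E) as HE.
  assert (Hg : forall h, (1 - Cexp (L (z + h)%C))%C = (1 - E * Cexp (beta * h))%C).
  { intros h. rewrite HL, Cexp_add. reflexivity. }
  assert (Hsm : forall h, Cmod h < /16 -> Cmod (beta * h)%C <= /2).
  { intros h Hh. rewrite Cmod_mult. pose proof (Cmod_ge_0 h). pose proof (Cmod_ge_0 beta).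
    apply Rle_trans with (8 * /16); [apply Rmult_le_compat; lra| lra]. }
  split.
  - intros h Hh. rewrite Hg.
    eapply Rle_trans; [apply Cmod_sub_le|]. rewrite Cmod_1, Cmod_mult.
    pose proof (Cexp_small_mod _ (Hsm h Hh)). pose proof (Cmod_ge_0 (Cexp (beta * h))).
    assert (E * Cexp (beta * h) = E * Cexp (beta * h))%C by reflexivity.
    assert (Cmod E * Cmod (Cexp (beta * h)) <= Cmod E * 2) by (apply Rmult_le_compat_l; lra).
    lra.
  - exists (- (E * beta))%C. split.
    + rewrite Cmod_opp, Cmod_mult. pose proof (Cmod_ge_0 beta).
      assert (Cmod E * Cmod beta <= Cmod E * 8) by (apply Rmult_le_compat_l; lra). lra.
    + intros h Hh. rewrite Hg.
      replace (L z) with (L (z + 0)%C) by (rewrite Cplus_0_r'; reflexivity).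
      rewrite Hg. replace (beta * 0)%C with (RtoC 0) by ring.
      assert (Cexp 0 = 1)%C.
      { apply C_ext; simpl; rewrite ?exp_0, ?cos_0, ?sin_0; ring. }
      replace (1 - E * Cexp (beta * h) - (1 - E * Cexp 0) - - (E * beta) * h)%C
        with (- (E * (Cexp (beta * h) - 1 - beta * h)))%C by (rewrite H; ring).
      rewrite Cmod_opp, Cmod_mult.
      pose proof (Cexp_quad _ (Hsm h Hh)).
      rewrite Cmod_mult in H0.
      pose proof (Cmod_ge_0 h). pose proof (Cmod_ge_0 beta).
      assert (3 * (Cmod beta * Cmod h) ^ 2 <= 192 * Cmod h ^ 2).
      { replace ((Cmod beta * Cmod h) ^ 2) with (Cmod beta ^ 2 * Cmod h ^ 2) by ring.
        assert (Cmod beta ^ 2 <= 64) by nra. assert (0 <= Cmod h ^ 2) by nra. nra. }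
      apply Rle_trans with (Cmod E * (3 * (Cmod beta * Cmod h) ^ 2)).
      * apply Rmult_le_compat_l; lra.
      * assert (0 <= Cmod E * (192 * Cmod h ^ 2 - 3 * (Cmod beta * Cmod h) ^ 2)) by (apply Rmult_le_pos; lra).
        nra.
Qed.

Lemma Inv_ext_mono F G z delta Q Q' :
  (forall w, F w = G w) -> 0 <= Q <= Q' -> Inv F z delta Q -> Inv G z delta Q'.
Proof.
  intros HFG HQ [H1 [D [HD H2]]]. split.
  - intros h Hh. rewrite <- HFG. specialize (H1 h Hh). lra.
  - exists D. split.
    + apply Rle_trans with (Q^2); [exact HD| apply pow_incr; lra].
    + intros h Hh. rewrite <- !HFG. eapply Rle_trans; [apply H2; exact Hh|].
      apply Rmult_le_compat_r; [pose proof (Cmod_ge_0 h); nra| apply pow_incr; lra].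
Qed.

Lemma Fac_mono g z delta eta eta' : eta <= eta' -> Fac g z delta eta -> Fac g z delta eta'.
Proof.
  intros He [H1 [d [Hd H2]]]. split.
  - intros h Hh. specialize (H1 h Hh). lra.
  - exists d. split; [lra|]. intros h Hh. eapply Rle_trans; [apply H2; exact Hh|].
    apply Rmult_le_compat_r; [pose proof (Cmod_ge_0 h); nra| lra].
Qed.

Lemma Cmod_tpi : Cmod tpi <= 8.
Proof.
  eapply Rle_trans; [apply Cmod_le_sum|]. unfold tpi; simpl.
  rewrite Rabs_R0, Rabs_right; pose proof PI_4; pose proof PI_gt3; lra.
Qed.

Lemma Fac_u1 lambda n z : Fac (fun w => 1 - u1 lambda n w)%C z (/16) (192 * (exp (2 * PI * Rabs (snd z)) * ek n)).
Proof.
  eapply Fac_mono; [| apply (Fac_exp (fun w => tpi * (am lambda (Z.of_nat n + 1) - w))%C (- tpi)%C z)].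
  - apply Rmult_le_compat_l; [lra|]. apply u1_bound.
  - intros h. ring.
  - rewrite Cmod_opp. apply Cmod_tpi.
Qed.

Lemma Fac_u2 lambda n z : Fac (fun w => 1 - u2 lambda n w)%C z (/16) (192 * (exp (2 * PI * Rabs (snd z)) * ek n)).
Proof.
  eapply Fac_mono; [| apply (Fac_exp (fun w => tpi * (w - am lambda (- Z.of_nat n)))%C tpi z)].
  - apply Rmult_le_compat_l; [lra|]. apply u2_bound.
  - intros h. ring.
  - apply Cmod_tpi.
Qed.

Lemma Inv_PN lambda z N :
  Inv (PN lambda N) z (/16) (exp (rsum (fun k => 384 * exp (2 * PI * Rabs (snd z)) * ek k) N)).
Proof.
  set (M := exp (2 * PI * Rabs (snd z))).
  assert (HM : 0 < M) by apply exp_pos.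
  induction N as [|n IH].
  - simpl. rewrite exp_0. split.
    + intros h _. rewrite Cmod_1. lra.
    + exists (RtoC 0). split; [rewrite Cmod_0; lra|].
      intros h _. replace (1 - 1 - 0 * h)%C with (RtoC 0) by ring. rewrite Cmod_0.
      pose proof (Cmod_ge_0 h). nra.
  - set (eta := 192 * (M * ek n)).
    assert (He : 0 <= eta) by (unfold eta; pose proof (ek_pos n); nra).
    set (S := rsum (fun k => 384 * M * ek k) n) in *.
    assert (HQ : 1 <= exp S).
    { rewrite <- exp_0. apply exp_mono. unfold S. apply rsum_nonneg. intros k. pose proof (ek_pos k). nra. }
    pose proof (Inv_mul _ _ z (/16) _ _ ltac:(lra) HQ He IH (Fac_u1 lambda n z)) as I1.
    assert (HQ1 : 1 <= exp S * (1 + eta)) by nra.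
    pose proof (Inv_mul _ _ z (/16) _ _ ltac:(lra) HQ1 He I1 (Fac_u2 lambda n z)) as I2.
    eapply Inv_ext_mono; [| | exact I2].
    + intros w. reflexivity.
    + split; [nra|]. simpl rsum. fold S.
      replace (S + 384 * M * ek n) with (S + eta + eta) by (unfold eta; ring).
      rewrite !exp_plus. pose proof (exp_ineq1_le eta). pose proof (exp_pos S).
      assert (exp S * (1 + eta) <= exp S * exp eta) by (apply Rmult_le_compat_l; lra).
      assert (0 <= exp S * (1 + eta)) by nra.
      apply Rmult_le_compat; lra.
Qed.

Lemma Inv_PN_unif lambda z N :
  Inv (PN lambda N) z (/16) (exp (768 * exp (2 * PI * Rabs (snd z)))).
Proof.
  eapply Inv_ext_mono; [intros; reflexivity| | apply Inv_PN].
  split; [left; apply exp_pos|]. apply exp_mono.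
  pose proof (rsum_geom' (384 * exp (2 * PI * Rabs (snd z))) N).
  pose proof (exp_pos (2 * PI * Rabs (snd z))).
  eapply Rle_trans; [|apply Rle_trans with (2 * (384 * exp (2 * PI * Rabs (snd z))))].
  - right. apply f_equal2; [|reflexivity]. apply functional_extensionality || idtac.
    reflexivity.
  - apply H. lra.
  - lra.
Qed.

Fixpoint GN (N : nat) (t : R) : R :=
  match N with O => 1 | S n => GN n t * (1 + exp (2 * PI * (t - INR n))) ^ 2 end.

Lemma GN_pos N t : 0 < GN N t.
Proof. induction N; simpl; [lra|]. pose proof (exp_pos (2 * PI * (t - INR N))). nra. Qed.

Lemma PN_GN lambda N w : Cmod (PN lambda N w) <= GN N (Rabs (snd w)).
Proof.
  induction N as [|n IH]; simpl.
  - rewrite Cmod_1; lra.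
  - rewrite !Cmod_mult.
    assert (E : exp (2 * PI * Rabs (snd w)) * ek n = exp (2 * PI * (Rabs (snd w) - INR n))).
    { unfold ek. rewrite <- exp_plus. f_equal. ring. }
    pose proof (u1_bound lambda n w). pose proof (u2_bound lambda n w). rewrite E in *.
    pose proof (Cmod_sub_le 1 (u1 lambda n w)). pose proof (Cmod_sub_le 1 (u2 lambda n w)).
    rewrite Cmod_1 in *.
    pose proof (Cmod_ge_0 (PN lambda n w)). pose proof (Cmod_ge_0 (1 - u1 lambda n w)%C).
    pose proof (Cmod_ge_0 (1 - u2 lambda n w)%C).
    set (e := exp (2 * PI * (Rabs (snd w) - INR n))) in *.
    assert (X : Cmod (PN lambda n w) * Cmod (1 - u1 lambda n w)%C <= GN n (Rabs (snd w)) * (1 + e))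
      by (apply Rmult_le_compat; lra).
    assert (Y : Cmod (PN lambda n w) * Cmod (1 - u1 lambda n w)%C * Cmod (1 - u2 lambda n w)%C
               <= GN n (Rabs (snd w)) * (1 + e) * (1 + e))
      by (apply Rmult_le_compat; try lra; apply Rmult_le_pos; lra).
    simpl. lra.
Qed.

Lemma GN_front N t : GN (S N) t = (1 + exp (2 * PI * t)) ^ 2 * GN N (t - 1).
Proof.
  induction N as [|N IH].
  - simpl. replace (t - 0) with t by ring. ring.
  - change (GN (S (S N)) t) with (GN (S N) t * (1 + exp (2 * PI * (t - INR (S N)))) ^ 2).
    rewrite IH. simpl GN. rewrite S_INR.
    replace (t - (INR N + 1)) with (t - 1 - INR N) by ring. ring.
Qed.

Lemma GN_neg N t : t <= 0 -> GN N t <= exp 4.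
Proof.
  intros Ht.
  assert (H : GN N t <= exp (2 * rsum (fun k => 1 * ek k) N)).
  { induction N as [|n IH]; simpl.
    - rewrite Rmult_0_r, exp_0. lra.
    - set (e := exp (2 * PI * (t - INR n))).
      assert (He : e <= ek n). { unfold e, ek. apply exp_mono. pose proof PI_gt3. nra. }
      assert (0 < e) by apply exp_pos.
      pose proof (exp_ineq1_le e).
      assert ((1 + e) ^ 2 <= exp (2 * (1 * ek n))).
      { replace (2 * (1 * ek n)) with (ek n + ek n) by ring. rewrite exp_plus.
        pose proof (exp_mono _ _ He). simpl. nra. }
      replace (2 * (rsum (fun k => 1 * ek k) n + 1 * ek n)) with
        (2 * rsum (fun k => 1 * ek k) n + 2 * (1 * ek n)) by ring.
      rewrite exp_plus. pose proof (GN_pos n t). apply Rmult_le_compat; try nra. }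
  eapply Rle_trans; [exact H|]. apply exp_mono. pose proof (rsum_geom' 1 N). lra.
Qed.

Lemma one_plus_exp a : 0 <= a -> 1 + exp a <= exp (a + 1).
Proof.
  intros Ha. rewrite exp_plus. pose proof (exp_ineq1_le 1). pose proof (exp_ineq1_le a).
  assert (1 <= exp a) by lra. nra.
Qed.

Lemma GN_claim n : forall t, t <= INR n -> forall N, GN N t <= exp (4 + 18 * INR n ^ 2).
Proof.
  induction n as [|n IH]; intros t Ht N.
  - simpl in *. replace (4 + 18 * (0 * (0 * 1))) with 4 by ring. apply GN_neg; lra.
  - destruct N as [|N].
    + simpl GN. rewrite <- exp_0. apply exp_mono. pose proof (pos_INR (S n)). assert (0 <= INR (S n) ^ 2) by (apply pow_le; lra). lra.
    + rewrite GN_front. rewrite S_INR in *.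
      pose proof (IH (t - 1) ltac:(lra) N).
      pose proof PI_gt3. pose proof PI_4. pose proof (pos_INR n).
      assert (A : 1 + exp (2 * PI * t) <= exp (8 * (INR n + 1) + 1)).
      { destruct (Rle_dec 0 t).
        - eapply Rle_trans; [apply one_plus_exp; nra|]. apply exp_mono. nra.
        - assert (exp (2 * PI * t) <= 1). { rewrite <- exp_0. apply exp_mono. nra. }
          pose proof (exp_ineq1_le (8 * (INR n + 1) + 1)). nra. }
      assert (A2 : (1 + exp (2 * PI * t)) ^ 2 <= exp (2 * (8 * (INR n + 1) + 1))).
      { replace (2 * (8 * (INR n + 1) + 1)) with ((8 * (INR n + 1) + 1) + (8 * (INR n + 1) + 1)) by ring.
        rewrite exp_plus. pose proof (exp_pos (2 * PI * t)). simpl. rewrite Rmult_1_r.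
        apply Rmult_le_compat; lra. }
      eapply Rle_trans.
      { apply Rmult_le_compat; [pose proof (exp_pos (2 * PI * t)); nra| left; apply GN_pos| exact A2| exact H]. }
      rewrite <- exp_plus. apply exp_mono. nra.
Qed.

Lemma GN_final N t : 0 <= t -> GN N t <= exp (40 + 36 * t ^ 2).
Proof.
  intros Ht. destruct (archimed t) as [H1 H2].
  assert (Hu : (0 <= up t)%Z) by (apply le_IZR; lra).
  set (n := Z.to_nat (up t)).
  assert (Hn : INR n = IZR (up t)) by (unfold n; rewrite INR_IZR_INZ, Z2Nat.id; auto).
  eapply Rle_trans; [apply (GN_claim n); lra|].
  apply exp_mono. rewrite Hn. assert (IZR (up t) ^ 2 <= (t + 1) ^ 2) by (apply pow_incr; lra). pose proof (pow2_ge_0 (t - 1)). lra.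
Qed.

Lemma PN_bound lambda N w : Cmod (PN lambda N w) <= exp (768 * exp (2 * PI * Rabs (snd w))).
Proof.
  destruct (Inv_PN_unif lambda w N) as [H _].
  specialize (H 0%C). rewrite Cplus_0_r' in H. apply H. rewrite Cmod_0. lra.
Qed.

Lemma PN_step lambda N w :
  let M := exp (2 * PI * Rabs (snd w)) in
  Cmod (PN lambda (S N) w - PN lambda N w)%C <= exp (768 * M) * (M ^ 2 + 2 * M) * ek N.
Proof.
  intros M.
  replace (PN lambda (S N) w - PN lambda N w)%C with
    (PN lambda N w * (u1 lambda N w * u2 lambda N w - u1 lambda N w - u2 lambda N w))%C
    by (simpl; ring).
  rewrite Cmod_mult.
  pose proof (PN_bound lambda N w) as HP. fold M in HP.
  pose proof (u1_bound lambda N w) as H1. pose proof (u2_bound lambda N w) as H2. fold M in H1, H2.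
  pose proof (ek_pos N). pose proof (ek_le1 N). assert (0 < M) by apply exp_pos.
  assert (HX : Cmod (u1 lambda N w * u2 lambda N w - u1 lambda N w - u2 lambda N w)%C <= (M ^ 2 + 2 * M) * ek N).
  { eapply Rle_trans; [apply Cmod_sub_le|].
    pose proof (Cmod_sub_le (u1 lambda N w * u2 lambda N w) (u1 lambda N w)).
    rewrite Cmod_mult in H4.
    pose proof (Cmod_ge_0 (u1 lambda N w)). pose proof (Cmod_ge_0 (u2 lambda N w)).
    assert (Cmod (u1 lambda N w) * Cmod (u2 lambda N w) <= (M * ek N) * (M * ek N)) by (apply Rmult_le_compat; lra).
    assert ((M * ek N) * (M * ek N) <= M ^ 2 * ek N).
    { replace ((M * ek N) * (M * ek N)) with (M ^ 2 * ek N * ek N) by ring.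
      assert (0 <= M ^ 2 * ek N) by (apply Rmult_le_pos; [apply pow_le|]; lra).
      nra. }
    nra. }
  pose proof (Cmod_ge_0 (PN lambda N w)).
  pose proof (Cmod_ge_0 (u1 lambda N w * u2 lambda N w - u1 lambda N w - u2 lambda N w)%C).
  replace (exp (768 * M) * (M ^ 2 + 2 * M) * ek N) with (exp (768 * M) * ((M ^ 2 + 2 * M) * ek N)) by ring.
  apply Rmult_le_compat; lra.
Qed.

Lemma Cexp_int (j : Z) : Cexp (0, 2 * PI * IZR j) = 1%C.
Proof.
  assert (Hs : sin (IZR j * PI) = 0) by (apply sin_eq_0_1; exists j; reflexivity).
  unfold Cexp. simpl. rewrite exp_0.
  replace (2 * PI * IZR j) with (2 * (IZR j * PI)) by ring.
  rewrite cos_2a_sin, sin_2a, Hs. apply C_ext; simpl; ring.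
Qed.

Lemma PN_zero lambda k w : (PN lambda (S k) w = 0)%C -> forall N, (k < N)%nat -> PN lambda N w = 0%C.
Proof.
  intros H N HN. induction N as [|N IH]; [lia|].
  destruct (Nat.eq_dec k N) as [->|Hne]; [exact H|].
  simpl. rewrite IH by lia. ring.
Qed.

Lemma PN_zero_points lambda (m n : Z) :
  exists k, forall N, (k < N)%nat -> PN lambda N (IZR n + lambda m, IZR m) = 0%C.
Proof.
  destruct (Z_le_gt_dec 1 m) as [Hm|Hm].
  - exists (Z.to_nat (m - 1)). apply PN_zero. simpl.
    assert (Hk : (Z.of_nat (Z.to_nat (m - 1)) + 1)%Z = m) by lia.
    unfold u1. rewrite Hk.
    replace (tpi * (am lambda m - ((IZR n + lambda m)%R, IZR m)))%C with ((0, 2 * PI * IZR (- n)) : C).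
    + rewrite Cexp_int. ring.
    + unfold tpi, am. apply C_ext; simpl; rewrite ?opp_IZR; ring.
  - exists (Z.to_nat (- m)). apply PN_zero. simpl.
    assert (Hk : (- Z.of_nat (Z.to_nat (- m)))%Z = m) by lia.
    unfold u2. rewrite Hk.
    replace (tpi * (((IZR n + lambda m)%R, IZR m) - am lambda m))%C with ((0, 2 * PI * IZR n) : C).
    + rewrite Cexp_int. ring.
    + unfold tpi, am. apply C_ext; simpl; ring.
Qed.

Lemma Cmod_1_minus u : 1 - Cmod u <= Cmod (1 - u)%C.
Proof.
  pose proof (Cmod_triangle (1 - u)%C u). replace (1 - u + u)%C with (RtoC 1) in H by ring.
  rewrite Cmod_1 in H. lra.
Qed.

Definition z0 : C := (0, /2).

Lemma PN_lower lambda N :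
  1 - rsum (fun k => 2 * exp (- PI) * ek k) N <= Cmod (PN lambda N z0).
Proof.
  assert (Ha : forall k, Cmod (u1 lambda k z0) = exp (- PI) * ek k).
  { intros k. rewrite Cmod_u1. unfold ek. rewrite <- exp_plus. f_equal. unfold z0; simpl. field. }
  assert (Hb : forall k, Cmod (u2 lambda k z0) = exp (- PI) * ek k).
  { intros k. rewrite Cmod_u2. unfold ek. rewrite <- exp_plus. f_equal. unfold z0; simpl. field. }
  assert (He : exp (- PI) <= / 4).
  { rewrite exp_Ropp. apply Rinv_le_contravar; [lra|]. pose proof (exp_ineq1_le PI). pose proof PI_gt3. lra. }
  induction N as [|N IH]; simpl.
  - rewrite Cmod_1. lra.
  - rewrite !Cmod_mult.
    pose proof (Cmod_1_minus (u1 lambda N z0)). pose proof (Cmod_1_minus (u2 lambda N z0)).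
    rewrite Ha in H. rewrite Hb in H0.
    set (a := exp (- PI) * ek N) in *.
    assert (0 <= a <= /4). { unfold a. pose proof (ek_pos N). pose proof (ek_le1 N). pose proof (exp_pos (- PI)). split; nra. }
    set (s := rsum (fun k => 2 * exp (- PI) * ek k) N) in *.
    replace (2 * exp (- PI) * ek N) with (2 * a) by (unfold a; ring).
    destruct (Rle_dec s 1) as [Hs|Hs].
    + assert (0 <= s). { unfold s. apply rsum_nonneg. intros k. pose proof (ek_pos k). pose proof (exp_pos (- PI)). nra. }
      pose proof (Cmod_ge_0 (PN lambda N z0)).
      assert (X : (1 - s) * (1 - a) <= Cmod (PN lambda N z0) * Cmod (1 - u1 lambda N z0)%C)
        by (apply Rmult_le_compat; lra).
      assert (Y : (1 - s) * (1 - a) * (1 - a) <= Cmod (PN lambda N z0) * Cmod (1 - u1 lambda N z0)%C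
                   * Cmod (1 - u2 lambda N z0)%C) by (apply Rmult_le_compat; nra).
      nra.
    + pose proof (Cmod_ge_0 (PN lambda N z0)).
      pose proof (Cmod_ge_0 (1 - u1 lambda N z0)%C). pose proof (Cmod_ge_0 (1 - u2 lambda N z0)%C).
      assert (0 <= Cmod (PN lambda N z0) * Cmod (1 - u1 lambda N z0)%C * Cmod (1 - u2 lambda N z0)%C)
        by (repeat apply Rmult_le_pos; lra).
      lra.
Qed.

Theorem proposition6 (lambda : Z -> R)
  (hlam : forall m : Z, 0 <= lambda m < 1) :
  exists (P : C -> C) (c : R),
    entire P /\
    (exists z : C, P z <> 0%C) /\
    (forall m n : Z, P (IZR n + lambda m, IZR m) = 0%C) /\
    0 < c /\
    (forall z : C, Cmod (P z) <= exp (c * Cmod z ^ 2)).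
Proof.
  set (c0 := exp (-40)).
  assert (Hc0 : 0 < c0 <= 1).
  { split; [apply exp_pos|]. unfold c0. rewrite <- exp_0. apply exp_mono. lra. }
  assert (Hcm : Cmod (RtoC c0) = c0) by (rewrite Cmod_R; apply Rabs_right; lra).
  set (f := fun N w => (PN lambda N w * RtoC c0)%C).
  set (P := fun w => CLim (fun N => f N w)).
  assert (Hcv : forall w, Ccv (fun N => f N w) (P w)).
  { intros w. apply Ccauchy_cv.
    set (M := exp (2 * PI * Rabs (snd w))).
    assert (0 < M) by apply exp_pos.
    apply geom_cauchy with (B := exp (768 * M) * (M ^ 2 + 2 * M)).
    - pose proof (exp_pos (768 * M)). apply Rmult_le_pos; [lra|]. pose proof (pow_le M 2). nra.
    - intros n. unfold f.
      replace (PN lambda (S n) w * c0 - PN lambda n w * c0)%C with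
        ((PN lambda (S n) w - PN lambda n w) * c0)%C by ring.
      rewrite Cmod_mult, Hcm. pose proof (PN_step lambda n w) as HS. cbv zeta in HS. fold M in HS.
      pose proof (Cmod_ge_0 (PN lambda (S n) w - PN lambda n w)%C).
      eapply Rle_trans; [|exact HS]. nra. }
  exists P, 36. split; [|split; [|split; [|split]]].
  - intros z. set (Q := exp (768 * exp (2 * PI * Rabs (snd z)))).
    apply (limit_holo f P z (/16) (Q ^ 4)); [lra| apply pow_le; left; apply exp_pos| exact Hcv|].
    intros n. destruct (Inv_PN_unif lambda z n) as [_ [D [_ HD]]]. fold Q in HD.
    exists (D * c0)%C. intros h Hh. unfold f.
    replace (PN lambda n (z + h)%C * c0 - PN lambda n z * c0 - D * c0 * h)%C with
      ((PN lambda n (z + h)%C - PN lambda n z - D * h) * c0)%C by ring.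
    rewrite Cmod_mult, Hcm. specialize (HD h Hh).
    pose proof (Cmod_ge_0 (PN lambda n (z + h)%C - PN lambda n z - D * h)%C). nra.
  - exists z0. intros H0.
    assert (Hlow : c0 * (1 - 4 * exp (- PI)) <= Cmod (P z0)).
    { apply (Ccv_ge _ _ _ 0 (Hcv z0)). intros n _. unfold f. rewrite Cmod_mult, Hcm.
      pose proof (PN_lower lambda n).
      pose proof (rsum_geom' (2 * exp (- PI)) n ltac:(pose proof (exp_pos (- PI)); lra)).
      nra. }
    rewrite H0, Cmod_0 in Hlow.
    assert (exp (- PI) < / 4).
    { rewrite exp_Ropp. apply Rinv_lt_contravar; [pose proof (exp_pos PI); lra|].
      pose proof (exp_ineq1_le PI). pose proof PI_gt3. lra. }
    nra.
  - intros m n. destruct (PN_zero_points lambda m n) as [k Hk].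
    set (w := (IZR n + lambda m, IZR m)) in *.
    apply Cmod_eq_0.
    assert (Cmod (P w - 0)%C <= 0).
    { apply (Ccv_le _ _ _ _ (Hcv _)). exists (S k). intros N HN. unfold f.
      rewrite Hk by lia. replace (0 * c0 - 0)%C with (RtoC 0) by ring. rewrite Cmod_0. lra. }
    replace (P w - 0)%C with (P w) in H by ring.
    pose proof (Cmod_ge_0 (P w)). lra.
  - lra.
  - intros z.
    assert (Cmod (P z - 0)%C <= exp (36 * Cmod z ^ 2)).
    { apply (Ccv_le _ _ _ _ (Hcv _)). exists 0%nat. intros N _. unfold f.
      replace (PN lambda N z * c0 - 0)%C with (PN lambda N z * c0)%C by ring.
      rewrite Cmod_mult, Hcm.
      pose proof (PN_GN lambda N z). pose proof (GN_final N (Rabs (snd z)) (Rabs_pos _)).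
      pose proof (Cmod_ge_0 (PN lambda N z)).
      assert (Cmod (PN lambda N z) * c0 <= exp (40 + 36 * Rabs (snd z) ^ 2) * c0) by (apply Rmult_le_compat_r; lra).
      unfold c0 in H2 at 2. rewrite <- exp_plus in H2.
      eapply Rle_trans; [exact H2|]. apply exp_mono.
      pose proof (Cmod_snd_le z). pose proof (Rabs_pos (snd z)).
      assert (Rabs (snd z) ^ 2 <= Cmod z ^ 2) by (apply pow_incr; lra). lra. }
    replace (P z - 0)%C with (P z) in H by ring. exact H.
Qed.

Print Assumptions proposition6.
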